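(* Let $d\ge2$. Then $$\sum_{k\ge1}W(D_{n_k-1,d};q)z^k=z\,\frac{(d+1)q+\binom{d+1}{2}q^2(1+z)}{(1-z)(1-dz)(1-d^2q^2z)}.$$
   Context: For a connected graph $G$, $W(G;q)=\sum_{\{u,v\}}q^{d(u,v)}$ over unordered pairs of distinct vertices, $d$ the graph distance. The $d$-ary dendrimer $D_{n,d}$ is the tree on vertex set $\{1,\ldots,n\}$ defined inductively: $D_{1,d}$ is the single vertex $1$, and $D_{n,d}$ is obtained from $D_{n-1,d}$ by attaching a new leaf $n$ to the smallest-numbered vertex of $D_{n-1,d}$ having degree $\le d$. $n_k=2+(d+1)\frac{d^k-1}{d-1}$; thus $D_{n_k-1,d}$ is the complete dendrimer in which the root has $d+1$ children, every other non-leaf has $d$ children, and all leaves are at distance $k$ from the root. *)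

(* Defs.v *)
From mathcomp Require Import all_boot all_order all_algebra.
Set Implicit Arguments. Unset Strict Implicit. Unset Printing Implicit Defensive.
Import GRing.Theory.

(* Trees on vertex set {1,...,n} encoded by a parent list [s]:
   the i-th entry (0-based) of [s] is the parent of vertex i+2. *)

Definition pdeg (s : seq nat) (v : nat) : nat :=
  (v != 1) + count (pred1 v) s.

Fixpoint dend_par (d n : nat) : seq nat :=
  match n with
  | 0 => [::]
  | 1 => [::]
  | n'.+1 => let s := dend_par d n' in
             rcons s (head 0 [seq v <- iota 1 n' | pdeg s v <= d])
  end.

Definition tadj (n : nat) (s : seq nat) (u v : nat) : bool :=
  [&& 1 <= u <= n, 1 <= v <= n &
      ((2 <= u) && (nth 0 s (u - 2) == v)) || ((2 <= v) && (nth 0 s (v - 2) == u))].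

Definition dendrimer_adj (n d : nat) : rel nat := tadj n (dend_par d n).

Fixpoint within (e : rel nat) (n k u v : nat) : bool :=
  match k with
  | 0 => u == v
  | k'.+1 => within e n k' u v || has (fun w => within e n k' u w && e w v) (iota 1 n)
  end.

(* d(u,v) = least k with a walk of length <= k (for a connected graph on n
   vertices it is < n) *)
Definition gdist (e : rel nat) (n u v : nat) : nat :=
  find (fun k => within e n k u v) (iota 0 n).

Definition wiener_poly (e : rel nat) (n : nat) : {poly int} :=
  (\sum_(1 <= u < n.+1) \sum_(u.+1 <= v < n.+1) 'X^(gdist e n u v))%R.

Definition nk (d k : nat) : nat := 2 + (d.+1) * ((d ^ k - 1) %/ (d - 1)).

Definition Wk (d k : nat) : {poly int} :=
  wiener_poly (dendrimer_adj (nk d k - 1) d) (nk d k - 1).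

(* Main.v *)
Require Import Defs.
From mathcomp Require Import all_boot all_order all_algebra.
From mathcomp Require Import ring zify.
Import GRing.Theory.

Definition par (d v : nat) : nat := if v <= 1 then 0 else (v - 3) %/ d + 1.

Lemma par_lt d v : 1 <= v -> par d v < v.
Proof.
rewrite /par; case: ifP => h1 hv; first by [].
have := leq_div (v - 3) d. lia.
Qed.

Lemma par_ge1 d v : 2 <= v -> 1 <= par d v.
Proof. by rewrite /par; case: ifP => h; [lia|rewrite addn1]. Qed.

Fixpoint tdf (d f u v : nat) : nat :=
  match f with
  | 0 => 0
  | f'.+1 => if u == v then 0 else if u < v then (tdf d f' u (par d v)).+1
             else (tdf d f' (par d u) v).+1
  end.

Lemma tdf_stable d f : forall g u v, u + v <= f -> u + v <= g -> tdf d f u v = tdf d g u v.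
Proof.
elim: f => [|f IH] [|g] u v /= h1 h2 //;
  try by (have -> : u = 0 by lia); (have -> : v = 0 by lia).
case: eqP => // /eqP huv; case: ifP => hlt.
  by congr S; apply: IH; have := par_lt d v; lia.
by congr S; apply: IH; have := par_lt d u; lia.
Qed.

Definition td d u v := tdf d (u + v) u v.

Lemma tdE d u v : td d u v =
  if u == v then 0 else if u < v then (td d u (par d v)).+1 else (td d (par d u) v).+1.
Proof.
rewrite /td; case: eqP => [->|/eqP huv]; first by case: (v + v) => //= n; rewrite eqxx.
have : 0 < u + v by lia.
case E: (u + v) => [//|f] _ /=; rewrite ifN_eq //; case: ifP => hlt.
  by congr S; apply: tdf_stable; have := par_lt d v; lia.
by congr S; apply: tdf_stable; have := par_lt d u; lia.
Qed.

Lemma td0 d u : td d u u = 0.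
Proof. by rewrite tdE eqxx. Qed.

Lemma tdC d u v : td d u v = td d v u.
Proof.
move: {2}(u + v) (leqnn (u + v)) => m; elim: m u v => [|m IH] u v hm.
  by (have -> : u = 0 by lia); (have -> : v = 0 by lia); rewrite td0.
rewrite tdE [td d v u]tdE eq_sym; case: eqP => // /eqP huv.
case: ltngtP huv => // h _.
- by rewrite IH //; have := par_lt d v; lia.
- by rewrite IH //; have := par_lt d u; lia.
Qed.

Lemma td_par d u x : 1 <= x ->
  td d u x <= (td d u (par d x)).+1 /\ td d u (par d x) <= (td d u x).+1.
Proof.
move=> hx; elim/ltn_ind: u => u IH.
have hpx := par_lt d x hx.
case: (ltngtP u x) => h.
- by rewrite (tdE d u x) ifF ?ifT //; [lia | apply/eqP; lia].
- rewrite (tdE d u x) (tdE d u (par d x)) !ifF; try (apply/negbTE; rewrite -ltnNge); try lia;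
    try (apply/eqP; lia).
  have hu : 1 <= u by lia.
  have := IH (par d u) (par_lt d u hu); lia.
- subst; rewrite td0 tdE ifF ?ifF ?td0 //; try (apply/negbTE; rewrite -ltnNge); try lia;
  by apply/eqP; lia.
Qed.

Lemma within_refl (e : rel nat) n k u : within e n k u u.
Proof. by elim: k => [|k IH] /=; [rewrite eqxx | rewrite IH]. Qed.

Lemma within_S (e : rel nat) n k u v : within e n k u v -> within e n k.+1 u v.
Proof. by move=> h /=; rewrite h. Qed.

Lemma within_cat (e : rel nat) n a b u w v :
  within e n a u w -> within e n b w v -> within e n (a + b) u v.
Proof.
move=> hu; elim: b v => [|b IH] v /=; first by move/eqP <-; rewrite addn0.
case/orP => [h|/hasP [w' hw' /andP [h1 h2]]].
  by rewrite addnS; apply: within_S; apply: IH.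
rewrite addnS /=; apply/orP; right; apply/hasP; exists w' => //.
by rewrite IH.
Qed.

Lemma within_edge (e : rel nat) n u x : 1 <= u <= n -> e u x -> within e n 1 u x.
Proof.
move=> hu he /=; apply/orP; right; apply/hasP; exists u.
  by rewrite mem_iota; lia.
by rewrite eqxx he.
Qed.

Arguments within_cat {e n a b u w v}.
Arguments within_edge {e n u x}.

Lemma tadj_up d n s v : (forall w, 2 <= w <= n -> nth 0 s (w - 2) = par d w) ->
  2 <= v <= n -> tadj n s (par d v) v /\ tadj n s v (par d v).
Proof.
move=> hs hv; have h1 := par_ge1 d v ltac:(lia).
have h2 := par_lt d v ltac:(lia).
rewrite /tadj (hs v hv) eqxx.
have -> : (1 <= par d v <= n) = true by lia.
have -> : (1 <= v <= n) = true by lia.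
have -> : 2 <= v = true by lia.
by rewrite /= orbT.
Qed.

Lemma tadj_inv d n s w v : (forall w, 2 <= w <= n -> nth 0 s (w - 2) = par d w) ->
  tadj n s w v -> [/\ 1 <= w <= n, 1 <= v <= n &
     ((2 <= w) /\ par d w = v) \/ ((2 <= v) /\ par d v = w)].
Proof.
move=> hs /and3P [hw hv /orP [/andP [h1 /eqP h2]| /andP [h1 /eqP h2]]]; split => //.
  by left; split => //; rewrite -hs //; lia.
by right; split => //; rewrite -hs //; lia.
Qed.

Lemma within_td d n s k u v : (forall w, 2 <= w <= n -> nth 0 s (w - 2) = par d w) ->
  1 <= u <= n -> 1 <= v <= n ->
  within (tadj n s) n k u v = (td d u v <= k).
Proof.
move=> hs hu hv; apply/idP/idP.
  elim: k v hv => [|k IH] v hv /=; first by move/eqP => ->; rewrite td0.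
  case/orP => [h|/hasP [w hw /andP [h1 h2]]]; first by have := IH v hv h; lia.
  have hw' : 1 <= w <= n by move: hw; rewrite mem_iota; lia.
  have := IH w hw' h1.
  case: (tadj_inv _ _ _ _ _ hs h2) => _ _ [[h3 h4]|[h3 h4]].
    by have := td_par d u w ltac:(lia); rewrite h4; lia.
  by have := td_par d u v ltac:(lia); rewrite h4; lia.
move: {2}(u + v) (leqnn (u + v)) => m; elim: m u v k hu hv => [|m IH] u v k hu hv hm.
  lia.
rewrite tdE; case: eqP => [<-|/eqP huv] hk; first exact: within_refl.
case: ltngtP huv => // h _ in hk.
- case: k hk => [//|k] hk.
  have hv2 : 2 <= v <= n by lia.
  have hp1 := par_ge1 d v ltac:(lia).
  have hp2 := par_lt d v ltac:(lia).
  have := IH u (par d v) k hu ltac:(lia) ltac:(lia) ltac:(lia).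
  move=> hw; rewrite -addn1; apply: (within_cat hw); apply: within_edge; first lia.
  by case: (tadj_up _ _ _ _ hs hv2).
- case: k hk => [//|k] hk.
  have hu2 : 2 <= u <= n by lia.
  have hp1 := par_ge1 d u ltac:(lia).
  have hp2 := par_lt d u ltac:(lia).
  have := IH (par d u) v k ltac:(lia) hv ltac:(lia) ltac:(lia).
  move=> hw; rewrite -add1n; apply: (within_cat _ hw); apply: within_edge; first lia.
  by case: (tadj_up _ _ _ _ hs hu2).
Qed.

Lemma find_leq t n : t < n -> find (fun k => t <= k) (iota 0 n) = t.
Proof.
move=> h; rewrite -(subnKC (ltnW h)) iotaD find_cat.
have -> : has (fun k => t <= k) (iota 0 t) = false.
  by apply/hasP => [[x]]; rewrite mem_iota; lia.
rewrite size_iota add0n; have -> : n - t = (n - t).-1.+1 by lia.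
by rewrite /= leqnn addn0.
Qed.

Lemma gdist_td d n s u v : (forall w, 2 <= w <= n -> nth 0 s (w - 2) = par d w) ->
  1 <= u <= n -> 1 <= v <= n -> td d u v < n ->
  gdist (tadj n s) n u v = td d u v.
Proof.
move=> hs hu hv ht; rewrite /gdist.
rewrite (eq_find (a2 := fun k => td d u v <= k)); first exact: find_leq.
by move=> k; apply: within_td.
Qed.

Definition cs (d v : nat) := if v == 1 then 2 else d * (v - 1) + 3.
Definition ce (d v : nat) := d * v + 3.

Lemma par_range d w v : 1 <= d -> 2 <= w -> 1 <= v ->
  (par d w == v) = (cs d v <= w < ce d v).
Proof.
move=> hd hw hv; rewrite /par /cs /ce ifF; last lia.
have h1 := leq_trunc_div (w - 3) d.
have h2 := ltn_ceil (w - 3) hd.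
move: h1 h2; set q := (w - 3) %/ d => h1 h2.
apply/idP/idP.
- move/eqP => e; subst v; case: eqP => [ev|nev].
    have -> : q = 0 by lia. lia.
  apply/andP; split; nia.
- case: eqP => [ev|nev] /andP [h3 h4]; apply/eqP; nia.
Qed.

Lemma cs_lt_ce d v : 1 <= d -> 1 <= v -> 2 <= cs d v < ce d v.
Proof. move=> hd hv; rewrite /cs /ce; case: eqP => [->|ne]; nia. Qed.

Lemma ce_cs d v v' : 1 <= v < v' -> ce d v <= cs d v'.
Proof. move=> h; rewrite /cs /ce ifF; [nia | apply/eqP; lia]. Qed.

Lemma full d v : 1 <= v -> (v != 1) + (ce d v - cs d v) = d.+1.
Proof. move=> hv; rewrite /cs /ce; case: eqP => [->|ne] /=; nia. Qed.

Lemma cnt d v m : 1 <= d -> 1 <= v ->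
  count (pred1 v) (map (par d) (iota 2 m)) = minn (ce d v) (m + 2) - cs d v.
Proof.
move=> hd hv; have := cs_lt_ce d v hd hv; elim: m => [|m IH] hc.
  rewrite /=; lia.
rewrite -[m.+1]addn1 iotaD map_cat count_cat IH // /= addn0.
rewrite (par_range d (2 + m) v hd ltac:(lia) hv).
case: (cs d v <= 2 + m < ce d v) /andP => [[h1 h2]|h] /=; lia.
Qed.

Lemma head_filter (P : pred nat) a m p : a <= p < a + m -> P p ->
  (forall v, a <= v < p -> ~~ P v) -> head 0 [seq v <- iota a m | P v] = p.
Proof.
elim: m a => [|m IH] a hp hP hn; first lia.
rewrite /=; case: (boolP (P a)) => ha.
  case: (ltngtP a p) => h //; first by have := hn a; rewrite ha; lia.
  lia.
apply: IH => //; first (case: (ltngtP a p) => h; [lia|lia|]); last first.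
  by move=> v hv; apply: hn; lia.
by subst; rewrite hP in ha.
Qed.

Lemma dend_parE d n : 1 <= d -> 1 <= n -> dend_par d n = map (par d) (iota 2 n.-1).
Proof.
move=> hd; elim: n => [//|n IH] hn.
case: n IH hn => [|n] IH hn; first by [].
have -> : dend_par d n.+2 = rcons (dend_par d n.+1)
   (head 0 [seq v <- iota 1 n.+1 | pdeg (dend_par d n.+1) v <= d]) by [].
rewrite IH //.
set p := par d n.+2.
have hp1 : 1 <= p by apply: par_ge1.
have hp2 : p < n.+2 by apply: par_lt.
have hr := par_range d n.+2 p hd ltac:(lia) hp1.
rewrite eqxx in hr; move/esym/andP: hr => [hr1 hr2].
have hpd : par d n.+2 = p by [].
clearbody p.
rewrite (head_filter _ _ _ p).
- rewrite (_ : n.+2.-1 = n + 1); last by rewrite addn1.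
  by rewrite iotaD map_cat cats1 /= hpd.
- lia.
- rewrite /pdeg cnt //=.
  have := full d p hp1; have := cs_lt_ce d p hd hp1; lia.
- move=> v hv; rewrite /pdeg cnt //=; last lia.
  have := full d v ltac:(lia); have := cs_lt_ce d v hd ltac:(lia).
  have := ce_cs d v p ltac:(lia). lia.
Qed.

Fixpoint M (d k : nat) : nat := if k is k'.+1 then d * M d k' + 2 else 1.
Fixpoint G (d k : nat) : nat := if k is k'.+1 then 1 + d * G d k' else 0.

Lemma M_G d k : M d k = 1 + d.+1 * G d k.
Proof. elim: k => [|k IH] /=; [lia | rewrite IH; nia]. Qed.

Lemma pow_G d k : 1 <= d -> d ^ k = (d - 1) * G d k + 1.
Proof. move=> hd; elim: k => [|k IH] /=; [lia | rewrite expnS IH; nia]. Qed.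

Lemma nk_M d k : 2 <= d -> nk d k - 1 = M d k.
Proof.
move=> hd; rewrite /nk M_G (pow_G d k) ?addnK ?mulKn; lia.
Qed.

Lemma M_ge1 d k : 1 <= M d k.
Proof. by case: k => //= k; rewrite addn2. Qed.

Lemma par_block d a j : 1 <= d -> j < d -> par d (d * a + j + 3) = a + 1.
Proof.
move=> hd hj; rewrite /par ifF; last lia.
by rewrite addnK mulnC divnMDl // divn_small // addn0.
Qed.

Lemma par_mono d v w : 2 <= v <= w -> par d v <= par d w.
Proof.
move=> h; rewrite /par !ifF; try lia.
by rewrite leq_add2r leq_div2r //; lia.
Qed.

Lemma par_M d k : 1 <= d -> par d (M d k.+1) = M d k.
Proof.
move=> hd; have h1 := M_ge1 d k; rewrite /=.
have -> : d * M d k + 2 = d * (M d k - 1) + (d - 1) + 3 by nia.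
by rewrite par_block; lia.
Qed.

Lemma par_le_M d k v : 1 <= d -> 2 <= v <= M d k.+1 -> par d v <= M d k.
Proof.
move=> hd hv; rewrite -(par_M d k hd); apply: par_mono; lia.
Qed.

Lemma depth_le d k v : 1 <= d -> 1 <= v <= M d k -> td d 1 v <= k.
Proof.
move=> hd; elim: k v => [|k IH] v hv.
  by have -> : v = 1 by move: hv => /=; lia.
case: (ltngtP v 1) => h; first lia; last by subst; rewrite td0.
rewrite tdE ifF ?ifT //; last (apply/eqP; lia).
have := IH (par d v); have := par_le_M d k v hd ltac:(lia).
have := par_ge1 d v ltac:(lia). lia.
Qed.

Lemma td_le_depth d u v : 1 <= u -> 1 <= v -> td d u v <= td d 1 u + td d 1 v.
Proof.
move: {2}(u + v) (leqnn (u + v)) => m; elim: m u v => [|m IH] u v hm hu hv.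
  lia.
rewrite tdE; case: eqP => // /eqP huv; case: ltngtP huv => // h _.
- have n1 : (1 == v) = false by apply/eqP; lia.
  have n2 : (1 < v) = true by lia.
  rewrite [td d 1 v]tdE n1 n2.
  have := IH u (par d v); have := par_lt d v ltac:(lia);
  have := par_ge1 d v ltac:(lia). lia.
- have n1 : (1 == u) = false by apply/eqP; lia.
  have n2 : (1 < u) = true by lia.
  rewrite [td d 1 u]tdE n1 n2.
  have := IH (par d u) v; have := par_lt d u ltac:(lia);
  have := par_ge1 d u ltac:(lia). lia.
Qed.

Lemma M_big d k : 2 <= d -> 2 * k < M d k.
Proof. move=> hd; elim: k => [|k IH] //=; nia. Qed.

Lemma td_lt d k u v : 2 <= d -> 1 <= u <= M d k -> 1 <= v <= M d k -> td d u v < M d k.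
Proof.
move=> hd hu hv; have := td_le_depth d u v ltac:(lia) ltac:(lia).
have := depth_le d k u ltac:(lia) hu; have := depth_le d k v ltac:(lia) hv.
have := M_big d k hd. lia.
Qed.

Local Open Scope ring_scope.

Lemma Wk_td d k : (2 <= d)%N ->
  Wk d k = \sum_(1 <= u < (M d k).+1) \sum_(u.+1 <= v < (M d k).+1) 'X^(td d u v).
Proof.
move=> hd; rewrite /Wk /wiener_poly /dendrimer_adj nk_M //.
apply: eq_big_nat => u hu; apply: eq_big_nat => v hv.
rewrite (gdist_td d) //; try lia.
- move=> w hw; rewrite dend_parE; try lia.
  rewrite (nth_map 0%N); last by rewrite size_iota; lia.
  by rewrite nth_iota; [congr par; lia | lia].
apply: td_lt => //; lia.
Qed.

Local Open Scope ring_scope.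

Notation R := {poly int}.

Lemma sq_tri d n :
  \sum_(1 <= u < n.+1) \sum_(1 <= v < n.+1) ('X^(td d u v) : R) =
  (\sum_(1 <= u < n.+1) \sum_(u.+1 <= v < n.+1) ('X^(td d u v) : R)) *+ 2 + n%:R.
Proof.
elim: n => [|n IH].
  by rewrite !big_geq // mul0rn add0r.
set A := \sum_(1 <= u < n.+1) ('X^(td d u n.+1) : R).
have e1 : \sum_(1 <= u < n.+2) \sum_(1 <= v < n.+2) ('X^(td d u v) : R) =
   \sum_(1 <= u < n.+1) \sum_(1 <= v < n.+1) ('X^(td d u v) : R) + A *+ 2 + 1.
  rewrite big_nat_recr //=.
  have -> : \sum_(1 <= v < n.+2) ('X^(td d n.+1 v) : R) = A + 1.
    rewrite big_nat_recr //= td0 expr0; congr (_ + _).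
    by apply: eq_big_nat => i _; rewrite tdC.
  rewrite (eq_big_nat _ _ (F2 := fun u => \sum_(1 <= v < n.+1) ('X^(td d u v) : R)
     + 'X^(td d u n.+1))); last by move=> u hu; rewrite big_nat_recr.
  rewrite big_split /= -/A.
  by rewrite mulr2n !addrA.
have e2 : \sum_(1 <= u < n.+2) \sum_(u.+1 <= v < n.+2) ('X^(td d u v) : R) =
   \sum_(1 <= u < n.+1) \sum_(u.+1 <= v < n.+1) ('X^(td d u v) : R) + A.
  rewrite big_nat_recr //= [\sum_(n.+2 <= v < n.+2) _]big_geq // addr0.
  rewrite (eq_big_nat _ _ (F2 := fun u => \sum_(u.+1 <= v < n.+1) ('X^(td d u v) : R)
     + 'X^(td d u n.+1))); last by move=> u hu; rewrite big_nat_recr //; lia.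
  by rewrite big_split.
rewrite e1 e2 IH mulrnDl -natr1 /=; ring.
Qed.

Definition Sf d a b c e : R := \sum_(a <= u < b) \sum_(c <= v < e) 'X^(td d u v).

Lemma sum_block d (g : nat -> R) B A c m :
  (forall i j, (i < m)%N -> (j < c)%N -> par d (B + c * i + j + 1) = (A + i + 1)%N) ->
  \sum_(B.+1 <= x < (B + c * m).+1) g (par d x) = (\sum_(A.+1 <= l < (A + m).+1) g l) *+ c.
Proof.
elim: m => [|m IH] h.
  by rewrite muln0 !addn0 !big_geq // mul0rn.
rewrite (big_cat_nat _ (n := (B + c * m).+1)); [|lia|nia].
rewrite IH; last by move=> i j hi hj; apply: h; lia.
rewrite addnS [in RHS]big_nat_recr /=; last lia.
rewrite mulrnDl; congr (_ + _).
rewrite (eq_big_nat _ _ (F2 := fun _ => g (A + m).+1)).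
  by rewrite sumr_const_nat; congr (_ *+ _); nia.
move=> x hx; congr g.
have -> : x = (B + c * m + (x - (B + c * m).+1) + 1)%N by lia.
rewrite h; lia.
Qed.

Definition Lo d k := if k is k'.+1 then (M d k').+1 else 1%N.
Definition cc d k := if k is _.+1 then d else d.+1.

Lemma M_le d k : (1 <= d)%N -> (M d k <= M d k.+1)%N.
Proof. move=> hd; rewrite /=; have := M_ge1 d k; nia. Qed.

Lemma block_k d k (g : nat -> R) : (2 <= d)%N ->
  \sum_((M d k).+1 <= x < (M d k.+1).+1) g (par d x) =
  (\sum_(Lo d k <= l < (M d k).+1) g l) *+ cc d k.
Proof.
move=> hd; case: k => [|k].
  rewrite (_ : M d 1 = 1 + d.+1 * 1)%N; last by rewrite /=; lia.
  rewrite (sum_block d g 1 0 d.+1 1) //.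
  move=> i j hi hj; have -> : i = 0%N by lia.
  have := par_range d (1 + d.+1 * 0 + j + 1) 1 ltac:(lia) ltac:(lia) isT.
  move=> h; apply/eqP; rewrite (_ : (0 + 0 + 1)%N = 1%N) // h /cs /ce /=; lia.
have e : M d k.+2 = (M d k.+1 + d * (M d k.+1 - M d k))%N.
  by rewrite /=; have := M_ge1 d k; nia.
rewrite e (sum_block d g (M d k.+1) (M d k) d (M d k.+1 - M d k)).
  by rewrite subnKC // M_le //; lia.
move=> i j hi hj.
have -> : (M d k.+1 + d * i + j + 1 = d * (M d k + i) + j + 3)%N by rewrite /=; nia.
by rewrite par_block //; lia.
Qed.

Definition Hs d k := Sf d 1 (M d k).+1 1 (M d k).+1.
Definition Ps d k := Sf d (Lo d k) (M d k).+1 1 (M d k).+1.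
Definition Qs d k := Sf d (Lo d k) (M d k).+1 (Lo d k) (M d k).+1.
Definition SNV d k := Sf d (M d k).+1 (M d k.+1).+1 1 (M d k).+1.
Definition SNN d k := Sf d (M d k).+1 (M d k.+1).+1 (M d k).+1 (M d k.+1).+1.

Lemma SNV_E d k : (2 <= d)%N -> SNV d k = ('X * Ps d k) *+ cc d k.
Proof.
move=> hd; rewrite /SNV /Sf.
have hb := block_k d k (fun l => 'X * \sum_(1 <= v < (M d k).+1) ('X^(td d l v) : R)) hd.
cbv beta in hb.
rewrite (eq_big_nat _ _ (F2 := fun x => 'X * \sum_(1 <= v < (M d k).+1)
   ('X^(td d (par d x) v) : R))).
  by rewrite hb /Ps /Sf mulr_sumr.
move=> x hx /=; rewrite mulr_sumr; apply: eq_big_nat => v hv.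
rewrite tdE ifF; last (apply/eqP; lia).
by rewrite ifF ?exprS //; lia.
Qed.

Lemma td_two d k x y : (2 <= d)%N -> (M d k < x <= M d k.+1)%N -> (M d k < y <= M d k.+1)%N ->
  x != y -> td d x y = (td d (par d x) (par d y)).+2.
Proof.
move=> hd hx hy /eqP nxy.
have px := par_le_M d k x ltac:(lia) ltac:(have := M_ge1 d k; lia).
have py := par_le_M d k y ltac:(lia) ltac:(have := M_ge1 d k; lia).
case: (ltngtP x y) => h; last by [].
- rewrite tdE ifF; last (apply/eqP; lia). rewrite ifT //.
  rewrite tdE ifF; last (apply/eqP; lia). rewrite ifF //; lia.
- rewrite tdE ifF; last (apply/eqP; lia). rewrite ifF; last lia.
  rewrite tdE ifF; last (apply/eqP; lia). rewrite ifT //; lia.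
Qed.

Lemma SNN_E d k : (2 <= d)%N ->
  SNN d k = ('X^2 * Qs d k) *+ (cc d k * cc d k) + (1 - 'X^2) *+ (M d k.+1 - M d k).
Proof.
move=> hd; rewrite /SNN /Sf.
have hge := M_ge1 d k.
rewrite (eq_big_nat _ _ (F2 := fun x => \sum_((M d k).+1 <= y < (M d k.+1).+1)
   ('X^2 * 'X^(td d (par d x) (par d y)) : R) + (1 - 'X^2))); last first.
  move=> x hx.
  rewrite (eq_big_nat _ _ (F2 := fun y => ('X^2 * 'X^(td d (par d x) (par d y)) : R)
     + (if y == x then 1 - 'X^2 else 0))); last first.
    move=> y hy; case: eqP => [->|/eqP nyx].
      by rewrite !td0 expr0 mulr1 addrC subrK.
    rewrite (td_two d k) //; [ | by rewrite eq_sym].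
    by rewrite addr0 -exprD add2n.
  by rewrite big_split /= -big_mkcond big_nat1_eq ifT.
rewrite big_split /= sumr_const_nat subSS; congr (_ + _).
have e1 : forall x, \sum_((M d k).+1 <= y < (M d k.+1).+1)
   ('X^2 * 'X^(td d (par d x) (par d y)) : R) =
   (\sum_(Lo d k <= l < (M d k).+1) ('X^2 * 'X^(td d (par d x) l) : R)) *+ cc d k.
  by move=> x; have := block_k d k (fun l => ('X^2 * 'X^(td d (par d x) l) : R)) hd.
rewrite (eq_bigr _ (fun x _ => e1 x)) sumrMnl exchange_big /=.
have e2 : forall l, \sum_((M d k).+1 <= x < (M d k.+1).+1)
   ('X^2 * 'X^(td d (par d x) l) : R) =
   (\sum_(Lo d k <= l' < (M d k).+1) ('X^2 * 'X^(td d l' l) : R)) *+ cc d k.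
  by move=> l; have := block_k d k (fun l' => ('X^2 * 'X^(td d l' l) : R)) hd.
rewrite (eq_bigr _ (fun l _ => e2 l)) sumrMnl -mulrnA exchange_big /=.
by rewrite /Qs /Sf mulr_sumr; congr (_ *+ _); apply: eq_bigr => i _; rewrite mulr_sumr.
Qed.

Lemma Sf_splitl d a m b c e : (a <= m <= b)%N -> Sf d a b c e = Sf d a m c e + Sf d m b c e.
Proof. by move=> h; rewrite /Sf (big_cat_nat _ (n := m)) //; lia. Qed.

Lemma Sf_splitr d a b c m e : (c <= m <= e)%N -> Sf d a b c e = Sf d a b c m + Sf d a b m e.
Proof.
move=> h; rewrite /Sf -big_split; apply: eq_bigr => u _.
by rewrite (big_cat_nat _ (n := m)) //; lia.
Qed.

Lemma Sf_sym d a b c e : Sf d a b c e = Sf d c e a b.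
Proof.
rewrite /Sf exchange_big; apply: eq_bigr => u _; apply: eq_bigr => v _.
by rewrite tdC.
Qed.

Lemma Hs_S d k : (2 <= d)%N -> Hs d k.+1 = Hs d k + SNV d k *+ 2 + SNN d k.
Proof.
move=> hd; have := M_le d k ltac:(lia); have := M_ge1 d k => h1 h2.
rewrite /Hs (Sf_splitl d 1 (M d k).+1); last lia.
rewrite (Sf_splitr d 1 _ 1 (M d k).+1); last lia.
rewrite (Sf_splitr d (M d k).+1 (M d k.+1).+1 1 (M d k).+1); last lia.
rewrite (Sf_sym d 1 (M d k).+1 (M d k).+1) -/(SNV d k) -/(SNN d k).
by rewrite mulr2n !addrA.
Qed.

Lemma Ps_S d k : (2 <= d)%N -> Ps d k.+1 = SNV d k + SNN d k.
Proof.
move=> hd; have := M_le d k ltac:(lia); have := M_ge1 d k => h1 h2.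
rewrite /Ps /= (Sf_splitr d (M d k).+1 (M d k.+1).+1 1 (M d k).+1) //; lia.
Qed.

Lemma Qs_S d k : Qs d k.+1 = SNN d k.
Proof. by []. Qed.

Lemma base0 d : Hs d 0 = 1 /\ Ps d 0 = 1 /\ Qs d 0 = 1.
Proof. by rewrite /Hs /Ps /Qs /Sf /= !big_nat1 td0 expr0. Qed.

Local Open Scope ring_scope.

Definition lN d k := (M d k.+1 - M d k)%N.

Lemma lN0 d : lN d 0 = d.+1.
Proof. rewrite /lN /=; lia. Qed.

Lemma lNS d k : (1 <= d)%N -> lN d k.+1 = (d * lN d k)%N.
Proof. move=> hd; rewrite /lN /= mulnBr; have := M_ge1 d k; nia. Qed.

Lemma MS d k : (1 <= d)%N -> (M d k.+1)%:R = (M d k)%:R + (lN d k)%:R :> R.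
Proof. move=> hd; rewrite -natrD /lN subnKC //; exact: M_le. Qed.

Lemma M2 d k : (1 <= d)%N -> M d k.+2 = (M d k.+1 + d * lN d k)%N.
Proof. move=> hd; rewrite -lNS // /lN subnKC //; exact: M_le. Qed.

Definition st := (R * R * R * R * R)%type.

Definition step (d : nat) (s : st) : st :=
  let: (H, P, Q, l, m) := s in
  let l1 := d%:R * l in
  let Q1 := 'X^2 * Q * (d%:R) ^+ 2 + (1 - 'X^2) * l1 in
  (H + 'X * P * d%:R *+ 2 + Q1, 'X * P * d%:R + Q1, Q1, l1, m + l1).

Definition state d k : st := (Hs d k.+1, Ps d k.+1, Qs d k.+1, (lN d k)%:R, (M d k.+1)%:R).

Lemma state_S d k : (2 <= d)%N -> state d k.+1 = step d (state d k).
Proof.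
move=> hd; rewrite /state /step.
rewrite Hs_S // Ps_S // Qs_S SNV_E // SNN_E //.
rewrite (_ : cc d k.+1 = d) // (_ : (M d k.+2 - M d k.+1)%N = lN d k.+1) //.
rewrite lNS; last lia.
congr (_, _, _, _, _); last first.
  by rewrite -natrM -natrD; congr (_%:R); apply: M2; lia.
all: ring.
Qed.

Definition invS d (s : st) : R :=
  let: (H, P, Q, l, m) := s in
  ('X * d%:R - 1) * P - 'X * d%:R * Q + (1 + 'X) * l.

Lemma invS_step d s : invS d (step d s) = 'X * d%:R * invS d s.
Proof. by case: s => [[[[H P] Q] l] m]; rewrite /invS /step; ring. Qed.

Lemma state0 d : (2 <= d)%N -> state d 0 =
  let Q1 := 'X^2 * (d.+1%:R) ^+ 2 + (1 - 'X^2) * d.+1%:R in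
  (1 + 'X * d.+1%:R *+ 2 + Q1, 'X * d.+1%:R + Q1, Q1, d.+1%:R, d.+2%:R).
Proof.
move=> hd; rewrite /state lN0 Hs_S // Ps_S // Qs_S SNV_E // SNN_E //.
have [h1 [h2 h3]] := base0 d; rewrite h1 h2 h3 /=.
rewrite (_ : (M d 1 - M d 0)%N = d.+1); last by rewrite /=; lia.
rewrite (_ : (d * 1 + 2)%N = d.+2); last by lia.
congr (_, _, _, _, _); ring.
Qed.

Lemma invS_state d k : (2 <= d)%N -> invS d (state d k) = 0.
Proof.
move=> hd; elim: k => [|k IH].
  by rewrite state0 // /invS /=; ring.
by rewrite state_S // invS_step IH mulr0.
Qed.

Local Open Scope ring_scope.

Definition Es (s : st) : R := let: (H, _, _, _, m) := s in H - m.
Definition c1 d : R := 1 + d%:R + (d ^ 2)%:R * 'X ^+ 2.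
Definition c2 d : R := d%:R + (d ^ 2)%:R * 'X ^+ 2 + d%:R * ((d ^ 2)%:R * 'X ^+ 2).
Definition c3 d : R := d%:R * ((d ^ 2)%:R * 'X ^+ 2).

Definition Rf d s : R := Es (step d (step d (step d s))) - c1 d * Es (step d (step d s))
  + c2 d * Es (step d s) - c3 d * Es s.

Lemma Rf_inv d s : ('X * d%:R - 1) * Rf d s = Rf d (0, 1, 0, 0, 0) * invS d s.
Proof.
case: s => [[[[H P] Q] l] m]; rewrite /Rf /invS /step /Es /c1 /c2 /c3 /=.
ring.
Qed.

Lemma W2 d k : (2 <= d)%N -> Wk d k *+ 2 = Hs d k - (M d k)%:R.
Proof. by move=> hd; rewrite Wk_td // /Hs /Sf sq_tri addrK. Qed.

Lemma W0 d : (2 <= d)%N -> Wk d 0 = 0.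
Proof. by move=> hd; rewrite Wk_td //= big_nat1 big_geq. Qed.

Lemma WS d k : (2 <= d)%N -> Wk d k.+1 *+ 2 = Es (state d k).
Proof. by move=> hd; rewrite W2. Qed.

Lemma Xd1_neq0 d : ('X * d%:R - 1 : R) != 0.
Proof.
apply/eqP => h; have := congr1 (fun p : R => p`_0) h.
by rewrite coefB coefXM coef1 coef0 /= sub0r => /eqP; rewrite oppr_eq0 oner_eq0.
Qed.

Lemma Rf_state d k : (2 <= d)%N -> Rf d (state d k) = 0.
Proof.
move=> hd; have h := Rf_inv d (state d k); rewrite invS_state // mulr0 in h.
by move/eqP: h; rewrite mulf_eq0 (negbTE (Xd1_neq0 d)) /= => /eqP.
Qed.

Lemma lin4 (w0 w1 w2 w3 E0 E1 E2 E3 a b c T : R) :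
  w0 *+ 2 = E0 -> w1 *+ 2 = E1 -> w2 *+ 2 = E2 -> w3 *+ 2 = E3 ->
  E3 - a * E2 + b * E1 - c * E0 = T *+ 2 -> w3 - a * w2 + b * w1 - c * w0 = T.
Proof.
move=> <- <- <- <- h.
have h2 : (2%:R : R) != 0.
  apply/eqP => e; have := congr1 (fun p : R => p`_0) e.
  by rewrite coefMn coef1 /= (coef0 _ 0).
apply: (mulIf h2); rewrite !mulr_natr -h; ring.
Qed.

Lemma Wrec d k : (2 <= d)%N ->
  Wk d k.+4 - c1 d * Wk d k.+3 + c2 d * Wk d k.+2 - c3 d * Wk d k.+1 = 0.
Proof.
move=> hd; apply: lin4; try apply: WS => //.
rewrite mul0rn -(Rf_state d k hd) /Rf !state_S //.
Qed.

Lemma Fcoef d N m : (2 <= d)%N -> (m <= N)%N ->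
  (\sum_(1 <= k < N.+1) (Wk d k)%:P * 'X^k : {poly R})`_m = Wk d m.
Proof.
move=> hd hm; rewrite coef_sum.
rewrite (eq_big_nat _ _ (F2 := fun k => if k == m then Wk d m else 0)); last first.
  by move=> k hk; rewrite coefCM coefXn eq_sym; case: eqP => [->|_]; rewrite ?mulr1 ?mulr0.
rewrite -big_mkcond big_nat1_eq; case: ifP => // h.
have -> : m = 0%N by lia.
by rewrite W0.
Qed.

Lemma binC d : ('C(d.+1, 2) * 2 = d.+1 * d)%N.
Proof.
elim: d => [//|d IH].
rewrite binS bin1; nia.
Qed.

Theorem proposition4p1 (d : nat) (hd : (2 <= d)%N) :
  let q : {poly int} := 'X in
  let num : {poly {poly int}} :=
    'X * ((d.+1%:R * q)%:P + ('C(d.+1, 2)%:R * q ^+ 2)%:P * (1 + 'X)) in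
  let den : {poly {poly int}} :=
    (1 - 'X) * (1 - (d%:R)%:P * 'X) * (1 - ((d ^ 2)%:R * q ^+ 2)%:P * 'X) in
  forall N j : nat, (j <= N)%N ->
    (den * \sum_(1 <= k < N.+1) (Wk d k)%:P * 'X^k)`_j = num`_j.
Proof.
move=> q num den N j hj.
set F := \sum_(1 <= k < N.+1) _.
have eden : den * F = F - (c1 d)%:P * ('X^1 * F) + (c2 d)%:P * ('X^2 * F)
   - (c3 d)%:P * ('X^3 * F).
  rewrite /den /c1 /c2 /c3 /q; ring.
have enum : num = (d.+1%:R * 'X + 'C(d.+1, 2)%:R * 'X^2)%:P * 'X^1
   + ('C(d.+1, 2)%:R * 'X^2)%:P * 'X^2.
  rewrite /num /q; ring.
rewrite eden enum !coefB !coefD !coefN !coefCM !coefXnM !coefXn !(Fcoef d N) //; try lia.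
have hW0 : Wk d 0 *+ 2 = 0 by rewrite W0 // mul0rn.
have hC := binC d.
case: j hj => [|[|[|[|j]]]] hj /=.
- by rewrite W0 //; ring.
- rewrite ?subSS ?subn0.
  apply: (lin4 _ _ _ _ 0 0 0 (Es (state d 0))); rewrite ?mul0rn ?WS //.
  rewrite (_ : ((d.+1%:R * 'X + 'C(d.+1, 2)%:R * 'X^2) * 1 + 'C(d.+1, 2)%:R * 'X^2 * 0)
     *+ 2 = (d.+1%:R * 'X) *+ 2 + ('C(d.+1, 2) * 2)%:R * 'X^2 :> R); last by ring.
  rewrite hC state0 // /Es /=; ring.
- rewrite ?subSS ?subn0.
  apply: (lin4 _ _ _ _ 0 0 (Es (state d 0)) (Es (state d 1))); rewrite ?mul0rn ?WS //.
  rewrite (_ : ((d.+1%:R * 'X + 'C(d.+1, 2)%:R * 'X^2) * 0 + 'C(d.+1, 2)%:R * 'X^2 * 1)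
     *+ 2 = ('C(d.+1, 2) * 2)%:R * 'X^2 :> R); last by ring.
  rewrite hC state_S // state0 // /Es /step /c1 /=; ring.
- rewrite ?subSS ?subn0.
  apply: (lin4 _ _ _ _ 0 (Es (state d 0)) (Es (state d 1)) (Es (state d 2)));
    rewrite ?mul0rn ?WS //.
  rewrite !state_S // state0 // /Es /step /c1 /c2 /c3 /=; ring.
- rewrite (_ : (j.+4 - 1 = j.+3)%N); last lia.
  rewrite (_ : (j.+4 - 2 = j.+2)%N); last lia.
  rewrite (_ : (j.+4 - 3 = j.+1)%N); last lia.
  by rewrite Wrec //; ring.
Qed.
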